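(* For all integers $k\ge0$, $$G_{(k+2)_{ab}}(q;a,b)=(1+aq)(1+bq)\,G_{k_b}(q;aq,bq),$$ and consequently $\lim_{k\to\infty}G_{k_b}(q;a,b)=(-aq;q)_\infty(-bq;q)_\infty$.
   Context: Notation: $(x;q)_\infty=\prod_{n\ge0}(1-xq^n)$. Coloured integers are $k_{ab},k_a,k_b$ for integers $k\ge1$, ordered $1_{ab}<1_a<1_b<2_{ab}<2_a<2_b<\cdots$; colours are ordered $ab<a<b$. An admissible partition is a finite (possibly empty) sequence $\lambda_1,\dots,\lambda_s$ of coloured integers, with no part $1_{ab}$, such that for $1\le i<s$, (integer of $\lambda_i$)$-$(integer of $\lambda_{i+1}$) $\ge2$ if the colour of $\lambda_i$ is $ab$ or the colour of $\lambda_i$ is smaller than the colour of $\lambda_{i+1}$, and $\ge1$ otherwise. Its weight is $a^{u}b^{v}q^{n}$ where $n$ is the sum of the integers, $u$ the number of parts of colour $a$ or $ab$, $v$ the number of parts of colour $b$ or $ab$. For a coloured integer $\kappa$ with $k\ge1$, $G_\kappa(q;a,b)$ is the sum of weights of admissible partitions with largest part $\le\kappa$; by convention $G_{0_b}(q;a,b)=1$. $G_{k_b}(q;aq,bq)$ denotes $G_{k_b}$ with $a,b$ replaced by $aq,bq$. *)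

(* Defs.v *)
From HB Require Import structures.
From mathcomp Require Import all_boot all_order all_algebra.
Set Implicit Arguments. Unset Strict Implicit. Unset Printing Implicit Defensive.
Import Order.TTheory GRing.Theory Num.Theory.

Inductive colour := Cab | Ca | Cb.

Definition crank (c : colour) : nat :=
  match c with Cab => 0 | Ca => 1 | Cb => 2 end.

(* A coloured integer k_c is the pair (k, c). *)
Definition cint := (nat * colour)%type.

Definition cleq (x y : cint) : bool :=
  (x.1 < y.1) || ((x.1 == y.1) && (crank x.2 <= crank y.2)).

Definition cgap (x y : cint) : nat :=
  if (crank x.2 == 0) || (crank x.2 < crank y.2) then 2 else 1.

Definition admissible (s : seq cint) : bool :=
  all (fun x => 0 < x.1) s &&
  all (fun x => ~~ ((x.1 == 1) && (crank x.2 == 0))) s &&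
  sorted (fun x y => y.1 + cgap x y <= x.1) s.

(* Finite enumeration of candidate sequences: all words of length <= k
   over the alphabet of coloured integers with integer in 1..k. *)
Fixpoint words (T : Type) (l : nat) (alph : seq T) : seq (seq T) :=
  match l with
  | 0 => [:: [::]]
  | l'.+1 => [seq x :: w | x <- alph, w <- words l' alph]
  end.

Definition alph (k : nat) : seq cint :=
  [seq (n, c) | n <- iota 1 k, c <- [:: Cab; Ca; Cb]].

Definition cands (k : nat) : seq (seq cint) :=
  flatten [seq words l (alph k) | l <- iota 0 k.+1].

Local Open Scope ring_scope.

Definition cweight (R : comNzRingType) (a b : R) (c : colour) : R :=
  match c with Cab => a * b | Ca => a | Cb => b end.

Definition pweight (R : comNzRingType) (q a b : R) (s : seq cint) : R :=
  \prod_(x <- s) (cweight a b x.2 * q ^+ x.1).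

Definition G (R : comNzRingType) (q a b : R) (kappa : cint) : R :=
  \sum_(s <- cands kappa.1 | admissible s && all (fun x => cleq x kappa) s)
     pweight q a b s.

(* Main.v *)
Require Import Defs.
From HB Require Import structures.
From mathcomp Require Import all_boot all_order all_algebra.
From mathcomp Require Import zify ring.
Import GRing.Theory.
Set Implicit Arguments. Unset Strict Implicit. Unset Printing Implicit Defensive.

Definition col_dec (n : nat) : colour := match n with 0 => Cab | 1 => Ca | _ => Cb end.
Lemma crankK : cancel crank col_dec. Proof. by case. Qed.
HB.instance Definition _ := Equality.copy colour (can_type crankK).

Lemma eq_colE (c d : colour) : (c == d) = (crank c == crank d).
Proof. by []. Qed.

Lemma mem_words (T : eqType) (A : seq T) l s :
  (s \in words l A) = (size s == l) && all (mem A) s.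
Proof.
elim: l s => [|l IH] s.
  by case: s.
case: s => [|y t].
  apply/negP => /flatten_mapP [x _] /mapP [w _] //.
rewrite /= eqSS.
apply/flatten_mapP/idP.
- case=> x xA /mapP [w wW [-> ->]]; move: wW; rewrite IH => /andP[/eqP -> ->].
  by rewrite eqxx xA.
- case/andP => /eqP st /andP [yA tA]; exists y => //; apply/mapP; exists t => //.
  by rewrite IH st eqxx.
Qed.

Lemma uniq_words (T : eqType) (A : seq T) l : uniq A -> uniq (words l A).
Proof.
move=> uA; elim: l => [|l IH] //=.
apply: allpairs_uniq => //.
by move=> [x1 w1] [x2 w2] _ _ /= [-> ->].
Qed.

Lemma mem_cands k s : (s \in cands k) = (size s <= k) && all (mem (alph k)) s.
Proof.
apply/flatten_mapP/idP.
- by case=> l; rewrite mem_iota mem_words => /andP[_ lk] /andP[/eqP -> ->]; rewrite -ltnS lk.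
- case/andP=> sk sA; exists (size s); first by rewrite mem_iota.
  by rewrite mem_words eqxx.
Qed.

Lemma uniq_cands k : uniq (cands k).
Proof.
rewrite /cands.
have uA : uniq (alph k).
  apply: allpairs_uniq; first exact: iota_uniq.
  - by [].
  - by move=> [x1 w1] [x2 w2] _ _ /= [-> ->].
elim: k.+1 0 => [|n IH] m //=.
rewrite cat_uniq uniq_words // IH andbT.
apply/hasPn => s /flatten_mapP [l]; rewrite mem_iota => /andP [ml _].
rewrite !mem_words => /andP [/eqP sl _]; apply/negP => /andP[/eqP sm _].
by move: ml; rewrite -sl sm ltnn.
Qed.

Lemma mem_alph k (x : cint) : (x \in alph k) = (0 < x.1 <= k).
Proof.
case: x => n c; apply/allpairsP/idP.
- by case=> [[m d]] /= [ ]; rewrite mem_iota => /andP [h1 h2] _ [-> _]; apply/andP; split; lia.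
- move=> /= h; exists (n, c); split => //=.
  + by rewrite mem_iota; apply/andP; split; lia.
  + by case: c.
Qed.

Definition Q (kappa : cint) (s : seq cint) :=
  admissible s && all (fun x => cleq x kappa) s.

Definition ltc (x y : cint) : bool := y.1 < x.1.

Lemma ltc_trans : transitive ltc.
Proof. by move=> x y z; rewrite /ltc => h1 h2; lia. Qed.

Lemma cgap_ge1 x y : 0 < cgap x y.
Proof. by rewrite /cgap; case: ifP. Qed.

Lemma adm_sorted s : admissible s -> sorted ltc s.
Proof.
case/andP => _; apply: sub_sorted => x y; rewrite /ltc.
by have := cgap_ge1 x y; lia.
Qed.

Lemma adm_lt y t : admissible (y :: t) -> all (fun z => z.1 < y.1) t.
Proof.
by move/adm_sorted => /= h; apply: (order_path_min ltc_trans h).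
Qed.

Lemma adm_cons y t : admissible (y :: t) =
  [&& 0 < y.1, ~~ ((y.1 == 1) && (crank y.2 == 0)), admissible t &
      (if t is z :: _ then z.1 + cgap y z <= y.1 else true)].
Proof.
rewrite /admissible /=; case: t => [|z t] /=; first by rewrite !andbT.
case: (0 < y.1); case: (0 < z.1); case: (all _ t); case: (~~ _); case: (~~ _);
  case: (all _ t); case: (_ <= y.1); case: (path _ _ _) => //.
Qed.

Lemma cleq_le x k : cleq x k -> x.1 <= k.1.
Proof. by rewrite /cleq => /orP [h | /andP [/eqP -> _]] //; lia. Qed.

Lemma Q_cons k y t : Q k (y :: t) = admissible (y :: t) && cleq y k.
Proof.
rewrite /Q /=; apply/idP/idP => [/and3P [-> -> _] //|/andP [ha hc]].
rewrite ha hc /=; apply/allP => z zt.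
have := allP (adm_lt ha) z zt; have := cleq_le hc.
by rewrite /cleq => h1 h2; apply/orP; left; lia.
Qed.

Lemma size_bound n s : sorted ltc s -> all (fun x => 0 < x.1 <= n) s -> size s <= n.
Proof.
elim: s n => [|y t IH] n //= hp /andP [/andP [h0 hn] ht].
have st : sorted ltc t by apply: (path_sorted hp).
have := IH (y.1.-1) st.
have al := order_path_min ltc_trans hp.
suff: all (fun x : cint => 0 < x.1 <= (y.1).-1) t by move=> H /(_ H); lia.
apply/allP => z zt; have := allP al z zt; have := allP ht z zt; rewrite /ltc.
by move=> /andP [h1 h2] h3; apply/andP; split; lia.
Qed.

Lemma Q_cands k s : Q k s -> s \in cands k.1.
Proof.
case/andP => ha hc; rewrite mem_cands.
have hall : all (fun x => 0 < x.1 <= k.1) s.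
  apply/allP => x xs; move/andP: ha => [/andP [/allP p _] _].
  by rewrite p //= (cleq_le (allP hc x xs)).
rewrite (size_bound (adm_sorted ha) hall) /=.
by apply/allP => x xs; change (x \in alph k.1); rewrite mem_alph (allP hall x xs).
Qed.

Local Open Scope ring_scope.

Lemma sum_set (R : comNzRingType) (l1 l2 : seq (seq cint)) (P1 P2 : pred (seq cint))
  (F : seq cint -> R) :
  uniq l1 -> uniq l2 -> (forall s, (s \in l1) && P1 s = (s \in l2) && P2 s) ->
  \sum_(s <- l1 | P1 s) F s = \sum_(s <- l2 | P2 s) F s.
Proof.
move=> u1 u2 H; rewrite -big_filter -[RHS]big_filter; apply: perm_big.
apply: uniq_perm; try exact: filter_uniq.
by move=> s; rewrite !mem_filter andbC H andbC.
Qed.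

Lemma cleq_refl x : cleq x x.
Proof. by rewrite /cleq eqxx leqnn orbT. Qed.

Lemma G_rec (R : comNzRingType) (q a b : R) (top prev tail : cint) :
  (0 < top.1)%N && ~~ ((top.1 == 1)%N && (crank top.2 == 0)%N) ->
  (forall z, cleq z top && (z != top) = cleq z prev) ->
  (forall z, (z.1 + cgap top z <= top.1)%N = cleq z tail) ->
  G q a b top = G q a b prev + cweight a b top.2 * q ^+ top.1 * G q a b tail.
Proof.
move=> Htop Hprev Htail.
have H1 : forall s, Q top s && (ohead s != Some top) = Q prev s.
  case=> [|y t] //=; rewrite !Q_cons -andbA; congr (_ && _); exact: Hprev.
have H2 : forall t, Q top (top :: t) = Q tail t.
  move=> t; rewrite Q_cons cleq_refl andbT adm_cons andbA Htop /=.
  case: t => [|z t]; first by rewrite /Q /admissible.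
  by rewrite Q_cons Htail.
have eG : forall k, G q a b k = \sum_(s <- cands k.1 | Q k s) pweight q a b s by [].
rewrite !eG.
rewrite (bigID (fun s => ohead s != Some top)) /=; congr (_ + _).
  apply: sum_set; try exact: uniq_cands.
  move=> s; rewrite H1; case hq: (Q prev s); rewrite ?andbF // andbT.
  rewrite (Q_cands hq); move: hq; rewrite -H1 => /andP [hq _].
  by rewrite (Q_cands hq).
transitivity (\sum_(s <- map (cons top) (cands tail.1) | Q tail (behead s))
                pweight q a b s).
  apply: sum_set; first exact: uniq_cands.
    by rewrite map_inj_uniq ?uniq_cands // => x y [].
  case=> [|y t].
    rewrite [RHS](_ : _ = false); first by rewrite [ohead _]/= !andbF.
    by apply/negbTE/negP => /andP [/mapP [t _]].
  rewrite [behead _]/= [ohead _]/= negbK.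
  case: (eqVneq y top) => [->|ne].
    rewrite mem_map; last by move=> x z [].
    rewrite eqxx andbT H2; case hq: (Q tail t); rewrite ?andbF // !andbT.
    by rewrite (Q_cands hq) Q_cands // H2.
  have -> : (Some y == Some top) = false by apply/negbTE.
  rewrite !andbF; apply/esym/negbTE/negP => /andP [/mapP [t' _ [e _]] _].
  by rewrite e eqxx in ne.
rewrite big_map big_distrr /=; apply: eq_bigr => s _.
by rewrite /pweight big_cons.
Qed.

Ltac arith := case=> ? []; rewrite /cleq /cgap ?xpair_eqE ?eq_colE /=;
  apply/idP/idP; lia.

Lemma Gb (R : comNzRingType) (q a b : R) k :
  G q a b (k.+1, Cb) = G q a b (k.+1, Ca) + b * q ^+ k.+1 * G q a b (k, Cb).
Proof. by rewrite (@G_rec _ _ _ _ _ (k.+1, Ca) (k, Cb)) //; first [by rewrite /= ?andbF | arith]. Qed.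

Lemma Ga (R : comNzRingType) (q a b : R) k :
  G q a b (k.+1, Ca) = G q a b (k.+1, Cab) + a * q ^+ k.+1 * G q a b (k, Ca).
Proof. by rewrite (@G_rec _ _ _ _ _ (k.+1, Cab) (k, Ca)) //; first [by rewrite /= ?andbF | arith]. Qed.

Lemma Gab (R : comNzRingType) (q a b : R) k :
  G q a b (k.+2, Cab) = G q a b (k.+1, Cb) + a * b * q ^+ k.+2 * G q a b (k, Cb).
Proof. by rewrite (@G_rec _ _ _ _ _ (k.+1, Cb) (k, Cb)) //; first [by rewrite /= ?andbF | arith]. Qed.

Lemma G0 (R : comNzRingType) (q a b : R) c : G q a b (0, c) = 1.
Proof. by rewrite /G /cands /= big_cons big_nil /= /pweight big_nil addr0. Qed.

Lemma G1ab (R : comNzRingType) (q a b : R) : G q a b (1, Cab) = 1.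
Proof. by rewrite /G /cands /= !big_cons big_nil /= /pweight big_nil !addr0. Qed.

Definition Bq (R : comNzRingType) (q a b : R) (j : nat) : R :=
  if j is j'.+1 then G q a b (j', Cb) else 0.

Lemma Crec (R : comNzRingType) (q a b : R) k :
  G q a b (k.+1, Cab) = G q a b (k, Cb) + a * b * q ^+ k.+1 * Bq q a b k.
Proof.
case: k => [|k]; first by rewrite G1ab G0 /= mulr0 addr0.
by rewrite Gab.
Qed.

Section Alg.
Variables (R : comNzRingType) (q a b : R).
Local Notation A k := (G q a b (k, Ca)).
Local Notation B k := (G q a b (k, Cb)).
Local Notation C k := (G q a b (k, Cab)).
Local Notation A' k := (G q (a * q) (b * q) (k, Ca)).
Local Notation B' k := (G q (a * q) (b * q) (k, Cb)).
Local Notation C' k := (G q (a * q) (b * q) (k, Cab)).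
Local Notation Bp k := (Bq q (a * q) (b * q) k).

Definition PK j := B j.+1 = (1 + b * q) * B' j + a * q * A' j + a * b * q ^+ 2 * Bp j.
Definition PI j := A j.+1 = (1 + a * q) * (A' j + b * q * Bp j).
Definition PT j := C j.+2 = (1 + a * q) * (1 + b * q) * B' j.

Lemma P0 : [/\ PK 0, PI 0 & PT 0].
Proof.
rewrite /PK /PI /PT /= !G0; split.
- rewrite Gb Ga Crec /= !G0 /=; ring.
- rewrite Ga Crec /= !G0 /=; ring.
- rewrite Gab Gb Ga Crec /= !G0 /=; ring.
Qed.

Lemma Pstep j : [/\ PK j, PI j & PT j] -> [/\ PK j.+1, PI j.+1 & PT j.+1].
Proof.
rewrite /PK /PI /PT => -[hK hI hT].
have eA' : A' j.+1 = B' j + a * q * (b * q) * q ^+ j.+1 * Bp j + a * q * q ^+ j.+1 * A' j.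
  by rewrite Ga Crec.
have eB' : B' j.+1 = A' j.+1 + b * q * q ^+ j.+1 * B' j by rewrite Gb.
have hI' : A j.+2 = (1 + a * q) * (A' j.+1 + b * q * Bp j.+1).
  rewrite Ga hT hI /= eA' !exprS; ring.
have hK' : B j.+2 = (1 + b * q) * B' j.+1 + a * q * A' j.+1 + a * b * q ^+ 2 * Bp j.+1.
  rewrite Gb hI' hK /= eB' eA' !exprS; ring.
split => //.
rewrite Gab hK' hK /= eB' eA' !exprS; ring.
Qed.

Lemma Pall j : [/\ PK j, PI j & PT j].
Proof. by elim: j => [|j IH]; [exact: P0 | exact: Pstep]. Qed.

End Alg.

Definition Pr (R : comNzRingType) (q a b : R) (N : nat) : R :=
  \prod_(1 <= n < N.+1) ((1 + a * q ^+ n) * (1 + b * q ^+ n)).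

Lemma Pr_step (R : comNzRingType) (q a b : R) N :
  Pr q a b N.+1 = (1 + a * q) * (1 + b * q) * Pr q (a * q) (b * q) N.
Proof.
rewrite /Pr big_nat_recl // expr1; congr (_ * _).
by apply: eq_bigr => i _; rewrite exprS; ring.
Qed.

Lemma base_case (R : comNzRingType) (q a b : R) k :
  exists c1 c2, G q a b (k, Cb) - 1 = q * (a * c1 + b * c2).
Proof.
elim: k => [|k [c1 [c2 IH]]].
  by exists 0, 0; rewrite G0 subrr !mulr0 addr0 mulr0.
exists (c1 + q ^+ k * (b * Bq q a b k + G q a b (k, Ca))), (c2 + q ^+ k * G q a b (k, Cb)).
have -> : G q a b (k.+1, Cb) - 1 = (G q a b (k.+1, Cb) - G q a b (k, Cb)) + (G q a b (k, Cb) - 1).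
  ring.
rewrite IH Gb Ga Crec !exprS; ring.
Qed.

Lemma limit_lemma N : forall k, (2 * N <= k)%N -> forall (R : comNzRingType) (q a b : R),
  exists c1 c2, G q a b (k, Cb) - Pr q a b N = q ^+ N.+1 * (a * c1 + b * c2).
Proof.
elim: N => [|N IH] k hk R q a b.
  have [c1 [c2 h]] := base_case q a b k.
  by exists c1, c2; rewrite /Pr big_geq // h expr1.
have [j ej] : exists j, k = j.+2 by exists k.-2; lia.
subst k.
have hj : (2 * N <= j)%N by lia.
have [c1 [c2 h]] := IH j hj R q (a * q) (b * q).
have [m em] : exists m, j = (m + N)%N by exists (j - N)%N; lia.
subst j.
have [_ _ hT] := Pall q a b (m + N).
exists ((1 + a * q) * (1 + b * q) * c1 + q ^+ m * G q a b ((m + N).+1, Ca)),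
       ((1 + a * q) * (1 + b * q) * c2 + q ^+ m * G q a b ((m + N).+1, Cb)).
have eB : G q (a * q) (b * q) (m + N, Cb) =
  Pr q (a * q) (b * q) N + q ^+ N.+1 * (a * q * c1 + b * q * c2).
  by rewrite -h; ring.
rewrite Gb Ga hT eB Pr_step !exprS exprD.
move: (G q a b ((m + N).+1, Ca)) (G q a b ((m + N).+1, Cb)) (Pr q (a * q) (b * q) N) (q ^+ m) (q ^+ N) => X Y Z U V.
ring.
Qed.

Theorem mainTheorem5 :
  (forall (R : comNzRingType) (k : nat) (q a b : R),
      G q a b (k.+2, Cab) = (1 + a * q) * (1 + b * q) * G q (a * q) (b * q) (k, Cb))
  /\
  (forall N : nat, exists K : nat, forall k : nat, (K <= k)%N ->
     forall (R : comNzRingType) (q a b : R), exists c : R,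
       G q a b (k, Cb)
       - \prod_(1 <= n < N.+1) ((1 + a * q ^+ n) * (1 + b * q ^+ n))
       = q ^+ N.+1 * c).
Proof.
split.
  by move=> R k q a b; have [_ _ hT] := Pall q a b k; exact: hT.
move=> N; exists (2 * N)%N => k hk R q a b.
have [c1 [c2 h]] := limit_lemma hk q a b.
by exists (a * c1 + b * c2).
Qed.
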